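(* Let $m\ge7$ with $m\equiv3\pmod4$, let $N=3^m-1$ and $v=\frac{3^m-1}{2}-3^{(m-1)/2}-1$. Then $\gcd(v,N)=1$, and for every integer $i$ with $0\le i\le\frac{3^{(m-1)/2}+1}{4}+1$, the $3$-weight of $v(1+2i)\bmod N$ is congruent to $1$ modulo $4$ (i.e. the $3$-adic digit vector of $v(1+2i)\bmod N$ lies in $S_1(m)$).
   Context: For an integer $i$, $i\bmod N$ is the unique $s\in\{0,\dots,N-1\}$ with $N\mid i-s$. For $0\le s\le 3^m-1$ with $3$-adic expansion $s=\sum_{j=0}^{m-1}s_j3^j$, $s_j\in\{0,1,2\}$, the $3$-weight is $\mathrm{wt}_3(s)=\sum_j s_j$. $S_j(m)=\{(i_0,\dots,i_{m-1})\in\{0,1,2\}^m:\sum i_k\equiv j\pmod 4\}$. *)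

(* Defs.v *)
From mathcomp Require Import all_boot.

(* 3-weight of s, using its m-digit 3-adic expansion s = sum_{j<m} s_j 3^j
   (meaningful for 0 <= s <= 3^m - 1): sum of the digits s_j. *)
Definition wt3 (m s : nat) : nat := \sum_(j < m) ((s %/ 3 ^ j) %% 3).

(* Main.v *)
Require Import Defs.
From mathcomp Require Import all_boot.
From mathcomp Require Import zify.
Lemma wt3S n s : wt3 n.+1 s = s %% 3 + wt3 n (s %/ 3).
Proof.
rewrite /wt3 big_ord_recl /= expn0 divn1.
congr (_ + _); apply: eq_bigr => j _. by rewrite /bump leq0n add1n expnS -!divnMA mulnC.
Qed.
Lemma wt30 n : wt3 n 0 = 0.
Proof. by rewrite /wt3 big1 // => j _; rewrite div0n. Qed.
Lemma wt3_0n s : wt3 0 s = 0.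
Proof. by rewrite /wt3 big_ord0. Qed.
Lemma wt3_add j n a b : a < 3 ^ j -> wt3 (j + n) (a + 3 ^ j * b) = wt3 j a + wt3 n b.
Proof.
elim: j a => [|j IH] a ha.
  by rewrite expn0 in ha; move: ha; rewrite ltnS leqn0 => /eqP ->; rewrite wt3_0n mul1n.
rewrite addSn !wt3S.
have -> : (a + 3 ^ j.+1 * b) = (a %/ 3 + 3 ^ j * b) * 3 + a %% 3.
  by rewrite expnS {1}(divn_eq a 3); lia.
rewrite modnMDl modn_mod divnMDl // (@divn_small (a %% 3) 3) ?ltn_mod // addn0.
rewrite IH ?addnA //.
by rewrite ltn_divLR // mulnC -expnS.
Qed.
Lemma wt3_digit n r q : r < 3 -> wt3 n.+1 (r + 3 * q) = r + wt3 n q.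
Proof. move=> hr; have := @wt3_add 1 n r q hr; rewrite expn1 add1n => ->.
by rewrite wt3S wt3_0n modn_small // addn0. Qed.
Lemma wt3_par n x : x < 3 ^ n -> wt3 n x %% 2 = x %% 2.
Proof.
elim: n x => [|n IH] x hx.
  by move: hx; rewrite expn0 ltnS leqn0 => /eqP ->; rewrite wt3_0n.
rewrite (divn_eq x 3) addnC mulnC wt3_digit ?ltn_mod //.
rewrite -modnDmr IH; last by rewrite ltn_divLR // mulnC -expnS.
rewrite modnDmr; set q := x %/ 3; set r := x %% 3. 
have -> : r + 3 * q = q * 2 + (r + q) by lia.
by rewrite modnMDl.
Qed.
Lemma wt3_le n x : wt3 n x <= 2 * n.
Proof.
elim: n x => [|n IH] x; first by rewrite wt3_0n.
rewrite wt3S; have := IH (x %/ 3); have : x %% 3 < 3 by rewrite ltn_mod. lia.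
Qed.
Lemma wt3_comp n x : x < 3 ^ n -> wt3 n (3 ^ n - 1 - x) = 2 * n - wt3 n x.
Proof.
elim: n x => [|n IH] x hx.
  by rewrite !wt3_0n.
have hq : x %/ 3 < 3 ^ n by rewrite ltn_divLR // mulnC -expnS.
have hr : x %% 3 < 3 by rewrite ltn_mod.
have e : 3 ^ n.+1 - 1 - x = (2 - x %% 3) + 3 * (3 ^ n - 1 - x %/ 3).
  rewrite expnS {1}(divn_eq x 3); lia.
rewrite e wt3_digit; last lia.
rewrite IH //.
have -> : wt3 n.+1 x = x %% 3 + wt3 n (x %/ 3) by rewrite wt3S.
have := wt3_le n (x %/ 3); lia.
Qed.

Lemma wt3_blocks k a0 a1 c : a0 < 3 ^ k -> a1 < 3 ^ k ->
  wt3 (k + k.+1) (a0 + 3 ^ k * (a1 + 3 ^ k * c)) = wt3 k a0 + wt3 k a1 + wt3 1 c.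
Proof.
move=> h0 h1; by rewrite wt3_add // -addn1 wt3_add // addnA.
Qed.

Lemma wt3_1 c : c < 3 -> wt3 1 c = c.
Proof. by move=> hc; rewrite wt3S wt3_0n addn0 modn_small. Qed.

Lemma wt3_small k : 2 <= k ->
  [/\ wt3 k 1 = 1, wt3 k 2 = 2, wt3 k 3 = 1 & wt3 k 4 = 2].
Proof.
case: k => [|[|k]] // _.
have E r q : r < 3 -> q < 3 -> wt3 k.+2 (r + 3 * q) = r + q.
  move=> hr hq; rewrite wt3_digit // -(addn0 q) -(muln0 3) wt3_digit // wt30.
  by rewrite muln0 !addn0.
split.
- by rewrite -[1]/(1 + 3 * 0) E.
- by rewrite -[2]/(2 + 3 * 0) E.
- by rewrite -[3]/(0 + 3 * 1) E.
- by rewrite -[4]/(1 + 3 * 1) E.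
Qed.

Lemma pow3_mod4 b : 3 ^ (2 * b + 1) %% 4 = 3.
Proof.
rewrite addn1 expnS expnM -modnMm -modnXm /=.
by rewrite exp1n.
Qed.

Theorem lemma42 (m : nat) :
  7 <= m -> m %% 4 = 3 ->
  let N := 3 ^ m - 1 in
  let v := (3 ^ m - 1) %/ 2 - 3 ^ ((m - 1) %/ 2) - 1 in
  coprime v N /\
  (forall i : nat, i <= (3 ^ ((m - 1) %/ 2) + 1) %/ 4 + 1 ->
     wt3 m ((v * (1 + 2 * i)) %% N) %% 4 = 1).
Proof.
move=> hm7 hm4 N v.
set k := (m - 1) %/ 2.
have hk : m = k + k.+1 by rewrite /k; lia.
have [b hb] : exists b, k = 2 * b + 1 by exists (k %/ 2); rewrite /k; lia.
have hk3 : 3 <= k by rewrite /k; lia.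
set P := 3 ^ k.
have eP : P = 3 ^ k by [].
have hP4 : P %% 4 = 3 by rewrite /P hb pow3_mod4.
set a := P %/ 4.
have hPa : P = 4 * a + 3 by rewrite /a {1}(divn_eq P 4) hP4; lia.
have hPge : 27 <= P by rewrite /P -[27]/(3 ^ 3) leq_pexp2l.
set A := 2 * a + 1.
have eA0 : A = 2 * a + 1 by [].
set H := A + P * (A + P * 1).
have eH : H = A + P * (A + P * 1) by [].
have h3m : 3 ^ m = 3 * P * P by rewrite hk addnS expnS expnD mulnA.
have hN : N = 2 * H by rewrite /N h3m /H /A hPa; lia.
have hH : (3 ^ m - 1) %/ 2 = H by rewrite -/N hN mulKn.
have hB : (P + 1) %/ 4 + 1 = a + 2 by rewrite hPa (_ : 4 * a + 3 + 1 = 4 * (a + 1)) ?mulKn //; lia.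
have hv : v = 1 + ((3 * A - 1) * (a + 1)) * 4.
  rewrite /v hH -/P /H /A hPa; lia.
split.
  rewrite hN coprimeMr coprimen2; apply/andP; split.
    by rewrite hv oddD oddM /= andbF.
  rewrite /coprime.
  have -> : H = v + (P + 1) by rewrite hv /H /A hPa; lia.
  rewrite gcdnDl gcdnC.
  have -> : v = (3 * A - 1) * (P + 1) + 1 by rewrite hv hPa /A; lia.
  by rewrite gcdnMDl gcdn1.
move=> i; rewrite -/k -/P hB => hi.
have hv2 : v = H - P - 1 by rewrite /v hH.
have hmod : (v * (1 + 2 * i)) %% N = H - (P + 1) * (1 + 2 * i).
  have hu : 1 + 2 * i <= 2 * a + 5 by lia.
  have hle : (P + 1) * (1 + 2 * i) <= H.
    have := leq_mul (leqnn (P + 1)) hu; rewrite /H /A hPa; lia.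
  have -> : v * (1 + 2 * i) = i * N + (H - (P + 1) * (1 + 2 * i)).
    rewrite hv2 hN; lia.
  rewrite modnMDl modn_small // hN; lia.
rewrite hmod hk.
have [s1 s2 s3 s4] := @wt3_small k ltac:(lia).
clear hmod hv2 hv hB hH hN h3m hP4 hm4 hm7.
clearbody P; clearbody a; clearbody A; clearbody H. clear v N.
have hcase : i <= a \/ i = a + 1 \/ i = a + 2 by lia.
case: hcase => [hia | [hia | hia]].
- have [D eA] : exists D, A = D + (1 + 2 * i) by exists (A - (1 + 2 * i)); rewrite eA0; lia.
  have hD : D < P by move: eA; rewrite eA0 hPa; lia.
  have -> : H - (P + 1) * (1 + 2 * i) = D + P * (D + P * 1).
    rewrite eH eA; lia.
  rewrite eP wt3_blocks -?eP // wt3_1 //.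
  have := @wt3_par k D ltac:(by rewrite -eP).
  have -> : D %% 2 = 0 by move: eA; rewrite eA0; lia.
  move=> hp; lia.
- have -> : H - (P + 1) * (1 + 2 * i) = (4 * a + 1) + P * (4 * a + P * 0).
    rewrite eH eA0 hia hPa; lia.
  have e1 : 4 * a + 1 = P - 1 - 1 by lia.
  have e2 : 4 * a = P - 1 - 2 by lia.
  rewrite eP wt3_blocks -?eP; try lia.
  rewrite e1 e2 eP !wt3_comp -?eP; try lia.
  rewrite wt3_1 // s1 s2 hb; lia.
- have -> : H - (P + 1) * (1 + 2 * i) = (4 * a - 1) + P * (4 * a - 2 + P * 0).
    rewrite eH eA0 hia hPa; lia.
  have e1 : 4 * a - 1 = P - 1 - 3 by lia.
  have e2 : 4 * a - 2 = P - 1 - 4 by lia.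
  rewrite eP wt3_blocks -?eP; try lia.
  rewrite e1 e2 eP !wt3_comp -?eP; try lia.
  rewrite wt3_1 // s3 s4 hb; lia.
Qed.
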